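(* Let $\varphi$ be an LTL formula over $2^{V_i}$ and let $\mathcal{A}_\varphi$ be an ACA with $\mathcal{L}(\mathcal{A}_\varphi)=\mathcal{L}(\varphi)$. If there exists a strategy for process $p_i$ that is winning for $\varphi$ (i.e. $\varphi$ is realizable by $p_i$), then every strategy for $p_i$ that is delay-dominant for $\mathcal{A}_\varphi$ is winning for $\varphi$.
   Context: Automata. For a finite set $\Sigma$ of atomic propositions, an alternating co-Büchi automaton (ACA) over $2^\Sigma$ is a tuple $\mathcal{A}=(Q,q_0,\delta,F)$ with a finite set of states $Q$, initial state $q_0\in Q$, set of rejecting states $F\subseteq Q$, and transition function $\delta:Q\times 2^\Sigma\to\mathbb{B}^+(Q)$ into positive Boolean formulas over $Q$ given in disjunctive normal form; $\delta(q,a)$ is identified with the set of its disjuncts, each disjunct $c\in\delta(q,a)$ being a set of states. A run tree of $\mathcal{A}$ on $\sigma=\sigma_0\sigma_1\cdots\in(2^\Sigma)^\omega$ is a $Q$-labeled tree $(T,\ell)$ ($T\subseteq\mathbb{N}^*$ prefix-closed) with $\ell(\varepsilon)=q_0$ and $\{\ell(x')\mid x'\text{ a child of }x\}\in\delta(\ell(x),\sigma_{|x|})$ for every node $x$; it is accepting if every infinite branch visits $F$ only finitely often. $\mathcal{A}$ accepts $\sigma$ if some run tree on $\sigma$ is accepting; $\mathcal{L}(\mathcal{A})$ is the set of accepted words. For an LTL formula $\varphi$, $\mathcal{L}(\varphi)$ is the set of infinite words satisfying $\varphi$. (As implicit in the game below, each $\delta(q,a)$ and each of its disjuncts is nonempty.)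 Processes and strategies. A process $p_i$ has disjoint finite sets $I_i$ of input and $O_i$ of output variables; $V_i=I_i\cup O_i$. A strategy for $p_i$ is a function $s:(2^{I_i})^*\to 2^{O_i}$ representable by a finite Moore machine. For $\gamma\in(2^{I_i})^\omega$ the computation $\mathrm{comp}(s,\gamma)\in(2^{V_i})^\omega$ is given by $\mathrm{comp}(s,\gamma)_j=\gamma_j\cup s(\gamma_0\cdots\gamma_{j-1})$ for all $j\ge 0$. A strategy $s$ for $p_i$ is winning for $\varphi$ if $\mathrm{comp}(s,\gamma)\models\varphi$ for all $\gamma\in(2^{I_i})^\omega$. Delay-dominance game. Let $\mathcal{A}=(Q,q_0,\delta,F)$ be an ACA and $\sigma,\sigma'$ infinite words over its alphabet. The game $(\mathcal{A},\sigma,\sigma')$ is played between Duplicator (Player 0) and Spoiler (Player 1) on positions of the forms $((p,q),j)$ and $((p,q,c,c'),j)$ (owned by Spoiler) and $((p,q,c),j)$ and $((p,q,c,q'),j)$ (owned by Duplicator), with $p,q,q'\in Q$, $c,c'\subseteq Q$, $j\in\mathbb{N}$. Moves: from $((p,q),j)$ to $((p,q,c),j)$ with $c\in\delta(p,\sigma_j)$; from $((p,q,c),j)$ to $((p,q,c,c'),j)$ with $c'\in\delta(q,\sigma'_j)$; from $((p,q,c,c'),j)$ to $((p,q,c,q'),j)$ with $q'\in c'$; from $((p,q,c,q'),j)$ to $((p',q'),j+1)$ with $p'\in c$. The initial position is $((q_0,q_0),0)$. For a position whose state tuple is $(p,q)$, $(p,q,c)$, $(p,q,c,c')$ or $(p,q,c,q')$,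 its alternative state is $p$ and its dominant state is $q$. A play $\rho_0\rho_1\cdots$ is won by Duplicator iff for every $k$ such that the dominant state of $\rho_k$ lies in $F$ there is $k'\ge k$ such that the alternative state of $\rho_{k'}$ lies in $F$. A strategy of a player maps finite play prefixes ending in one of its positions to a legal successor; a Duplicator strategy is winning if every play from the initial position consistent with it is won by Duplicator. Delay-dominance. For strategies $s,t$ of $p_i$, an ACA $\mathcal{A}$ over $2^{V_i}$ and $\gamma\in(2^{I_i})^\omega$: $s$ delay-dominates $t$ on $\gamma$ if Duplicator has a winning strategy in $(\mathcal{A},\mathrm{comp}(t,\gamma),\mathrm{comp}(s,\gamma))$; $s$ delay-dominates $t$ if this holds for all $\gamma$; $s$ is delay-dominant for $\mathcal{A}$ (and $p_i$) if it delay-dominates every strategy $t$ for $p_i$. *)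

(* Defs.v *)
From mathcomp Require Import all_boot.
Set Implicit Arguments.
Unset Strict Implicit.
Unset Printing Implicit Defensive.

Definition word (AP : finType) := nat -> {set AP}.

Inductive ltl (AP : finType) : Type :=
| LTrue : ltl AP
| LAtom : AP -> ltl AP
| LNot : ltl AP -> ltl AP
| LAnd : ltl AP -> ltl AP -> ltl AP
| LNext : ltl AP -> ltl AP
| LUntil : ltl AP -> ltl AP -> ltl AP.

Fixpoint ltl_holds (AP : finType) (w : word AP) (i : nat) (f : ltl AP) : Prop :=
  match f with
  | LTrue => True
  | LAtom a => a \in w i
  | LNot g => ~ ltl_holds w i g
  | LAnd g h => ltl_holds w i g /\ ltl_holds w i h
  | LNext g => ltl_holds w i.+1 g
  | LUntil g h => exists k, i <= k /\ ltl_holds w k h /\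
                    forall m, i <= m -> m < k -> ltl_holds w m g
  end.

Definition ltl_sat (AP : finType) (w : word AP) (f : ltl AP) : Prop :=
  ltl_holds w 0 f.

(* An ACA over 2^AP is given by a finite state type Q, an initial state q0,
   a transition function delta (each delta q a is the set of its DNF
   disjuncts, each a set of states) and the set F of rejecting states. *)

(* Well-formedness implicit in the paper: every delta q a and each of its
   disjuncts is nonempty. *)
Definition aca_wf (AP Q : finType) (delta : Q -> {set AP} -> {set {set Q}}) :=
  forall q a, delta q a != set0 /\ forall c, c \in delta q a -> c != set0.

Definition run_tree (AP Q : finType) (q0 : Q)
  (delta : Q -> {set AP} -> {set {set Q}}) (sigma : word AP)
  (T : seq nat -> Prop) (l : seq nat -> Q) : Prop :=
  [/\ T [::],
      (forall x n, T (rcons x n) -> T x),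
      l [::] = q0 &
      forall x, T x ->
        exists2 c, c \in delta (l x) (sigma (size x)) &
          forall q, q \in c <-> exists n, T (rcons x n) /\ l (rcons x n) = q].

Definition branch_node (b : nat -> nat) (k : nat) : seq nat := mkseq b k.

Definition run_accepting (Q : finType) (F : {set Q})
  (T : seq nat -> Prop) (l : seq nat -> Q) : Prop :=
  forall b : nat -> nat, (forall k, T (branch_node b k)) ->
    exists N, forall k, N <= k -> l (branch_node b k) \notin F.

Definition aca_accepts (AP Q : finType) (q0 : Q)
  (delta : Q -> {set AP} -> {set {set Q}}) (F : {set Q}) (sigma : word AP) : Prop :=
  exists T l, run_tree q0 delta sigma T l /\ run_accepting F T l.

(* Process p_i with input variables I and output variables O (disjoint,
   realised as the two summands); V_i = (I + O)%type. *)

Definition in_letter (I O : finType) (g : {set I}) : {set (I + O)%type} := inl @: g.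
Definition out_letter (I O : finType) (o : {set O}) : {set (I + O)%type} := inr @: o.

Definition finite_state (I O : finType) (s : seq {set I} -> {set O}) : Prop :=
  exists (n : nat) (m0 : 'I_n) (tr : 'I_n -> {set I} -> 'I_n)
         (out : 'I_n -> {set O}),
    forall w, s w = out (foldl tr m0 w).

Definition prefix (A : Type) (g : nat -> A) (j : nat) : seq A := mkseq g j.

Definition comp (I O : finType) (s : seq {set I} -> {set O})
  (gamma : nat -> {set I}) : word ((I + O)%type) :=
  fun j => in_letter O (gamma j) :|: out_letter I (s (prefix gamma j)).

Definition winning (I O : finType) (phi : ltl ((I + O)%type))
  (s : seq {set I} -> {set O}) : Prop :=
  forall gamma : nat -> {set I}, ltl_sat (comp s gamma) phi.

Inductive pos (Q : finType) : Type :=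
| PosA : Q -> Q -> nat -> pos Q
| PosB : Q -> Q -> {set Q} -> nat -> pos Q
| PosC : Q -> Q -> {set Q} -> {set Q} -> nat -> pos Q
| PosD : Q -> Q -> {set Q} -> Q -> nat -> pos Q.

Definition dup_owned (Q : finType) (x : pos Q) : bool :=
  match x with PosB _ _ _ _ | PosD _ _ _ _ _ => true | _ => false end.

Definition alt_state (Q : finType) (x : pos Q) : Q :=
  match x with
  | PosA p _ _ | PosB p _ _ _ | PosC p _ _ _ _ | PosD p _ _ _ _ => p end.

Definition dom_state (Q : finType) (x : pos Q) : Q :=
  match x with
  | PosA _ q _ | PosB _ q _ _ | PosC _ q _ _ _ | PosD _ q _ _ _ => q end.

Definition game_move (AP Q : finType) (delta : Q -> {set AP} -> {set {set Q}})
  (sigma sigma' : word AP) (x y : pos Q) : Prop :=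
  match x, y with
  | PosA p q j, PosB p1 q1 c j1 =>
      [/\ p1 = p, q1 = q, j1 = j & c \in delta p (sigma j)]
  | PosB p q c j, PosC p1 q1 c1 c' j1 =>
      [/\ p1 = p, q1 = q, c1 = c, j1 = j & c' \in delta q (sigma' j)]
  | PosC p q c c' j, PosD p1 q1 c1 q' j1 =>
      [/\ p1 = p, q1 = q, c1 = c, j1 = j & q' \in c']
  | PosD p q c q' j, PosA p' q1 j1 =>
      [/\ q1 = q', j1 = j.+1 & p' \in c]
  | _, _ => False
  end.

Definition init_pos (Q : finType) (q0 : Q) : pos Q := PosA q0 q0 0.

Definition play_prefix (AP Q : finType) (q0 : Q)
  (delta : Q -> {set AP} -> {set {set Q}}) (sigma sigma' : word AP)
  (h : seq (pos Q)) : Prop :=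
  h <> [::] /\ head (init_pos q0) h = init_pos q0 /\
  forall i, i.+1 < size h ->
    game_move delta sigma sigma' (nth (init_pos q0) h i) (nth (init_pos q0) h i.+1).

Definition is_play (AP Q : finType) (q0 : Q)
  (delta : Q -> {set AP} -> {set {set Q}}) (sigma sigma' : word AP)
  (rho : nat -> pos Q) : Prop :=
  rho 0 = init_pos q0 /\ forall k, game_move delta sigma sigma' (rho k) (rho k.+1).

Definition dup_wins_play (Q : finType) (F : {set Q}) (rho : nat -> pos Q) : Prop :=
  forall k, dom_state (rho k) \in F ->
    exists2 k', k <= k' & alt_state (rho k') \in F.

Definition dup_strategy (AP Q : finType) (q0 : Q)
  (delta : Q -> {set AP} -> {set {set Q}}) (sigma sigma' : word AP)
  (f : seq (pos Q) -> pos Q) : Prop :=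
  forall h, play_prefix q0 delta sigma sigma' h ->
    dup_owned (last (init_pos q0) h) ->
    game_move delta sigma sigma' (last (init_pos q0) h) (f h).

Definition consistent (Q : finType) (f : seq (pos Q) -> pos Q)
  (rho : nat -> pos Q) : Prop :=
  forall k, dup_owned (rho k) -> rho k.+1 = f (mkseq rho k.+1).

Definition dup_wins_game (AP Q : finType) (q0 : Q)
  (delta : Q -> {set AP} -> {set {set Q}}) (F : {set Q})
  (sigma sigma' : word AP) : Prop :=
  exists f, dup_strategy q0 delta sigma sigma' f /\
    forall rho, is_play q0 delta sigma sigma' rho -> consistent f rho ->
      dup_wins_play F rho.

Definition delay_dominates (I O Q : finType) (q0 : Q)
  (delta : Q -> {set (I + O)%type} -> {set {set Q}}) (F : {set Q})
  (s t : seq {set I} -> {set O}) : Prop :=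
  forall gamma : nat -> {set I},
    dup_wins_game q0 delta F (comp t gamma) (comp s gamma).

Definition delay_dominant (I O Q : finType) (q0 : Q)
  (delta : Q -> {set (I + O)%type} -> {set {set Q}}) (F : {set Q})
  (s : seq {set I} -> {set O}) : Prop :=
  forall t, finite_state t -> delay_dominates q0 delta F s t.

(* Main.v *)
Require Import Defs.
From mathcomp Require Import all_boot.
From Stdlib Require Import ClassicalEpsilon Lia.
From mathcomp Require Import zify.

Definition pb (P : Prop) : bool := if excluded_middle_informative P then true else false.
Lemma pbP (P : Prop) : reflect P (pb P).
Proof. rewrite /pb; case: excluded_middle_informative => H; constructor; done. Qed.

Section Sim.
Variables (AP Q : finType) (q0 : Q) (delta : Q -> {set AP} -> {set {set Q}})
  (F : {set Q}) (sigma sigma' : word AP).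
Variables (T : seq nat -> Prop) (l : seq nat -> Q) (f : seq (pos Q) -> pos Q).
Hypothesis HT : run_tree q0 delta sigma T l.
Hypothesis HA : run_accepting F T l.
Hypothesis Hf : dup_strategy q0 delta sigma sigma' f.
Hypothesis Hw : forall rho, is_play q0 delta sigma sigma' rho -> consistent f rho ->
  dup_wins_play F rho.

Definition kids (y : seq nat) : {set Q} :=
  [set q | pb (exists n, T (rcons y n) /\ l (rcons y n) = q)].

Definition getC (x : pos Q) : {set Q} :=
  match x with PosC _ _ _ c' _ => c' | _ => set0 end.

Definition dq (q : Q) (n : nat) : Q :=
  match @unpickle (Q * nat)%type n with Some (q', _) => q' | None => q end.
Definition dm (n : nat) : nat :=
  match @unpickle (Q * nat)%type n with Some (_, m) => m | None => 0 end.

Record st := St { sh : seq (pos Q); sy : seq nat; sok : bool }.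

Definition ip := init_pos q0.

Definition H1 (h : seq (pos Q)) (y : seq nat) : seq (pos Q) :=
  rcons h (PosB (alt_state (last ip h)) (dom_state (last ip h)) (kids y) (size y)).
Definition H2 (h : seq (pos Q)) (y : seq nat) (q' : Q) : seq (pos Q) :=
  rcons (rcons (H1 h y) (f (H1 h y)))
    (PosD (alt_state (last ip h)) (dom_state (last ip h)) (kids y) q' (size y)).

Definition step (s : st) (n : nat) : st :=
  let: St h y ok := s in
  let q' := dq (dom_state (last ip h)) n in
  let m := dm n in
  St (rcons (H2 h y q') (f (H2 h y q'))) (rcons y m)
    [&& ok, q' \in getC (f (H1 h y)), pb (T (rcons y m)) &
        l (rcons y m) == alt_state (f (H2 h y q'))].

Definition run (x : seq nat) : st := foldl step (St [:: ip] [::] true) x.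

Lemma run_rcons x n : run (rcons x n) = step (run x) n.
Proof. by rewrite /run foldl_rcons. Qed.

Lemma sy_run x : sy (run x) = map dm x.
Proof.
elim/last_ind: x => [//|x n IH]; rewrite run_rcons map_rcons -IH.
by case: (run x).
Qed.

Lemma size_run x : size (sh (run x)) = 4 * size x + 1.
Proof.
elim/last_ind: x => [//|x n IH]; rewrite run_rcons size_rcons.
case: (run x) IH => h y ok /= IH.
rewrite /H2 /H1 !size_rcons IH; lia.
Qed.

Definition cons_prop (h : seq (pos Q)) : Prop :=
  forall i, i.+1 < size h -> dup_owned (nth ip h i) -> nth ip h i.+1 = f (take i.+1 h).

Lemma pp_rcons h a : play_prefix q0 delta sigma sigma' h ->
  game_move delta sigma sigma' (last ip h) a -> play_prefix q0 delta sigma sigma' (rcons h a).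
Proof.
case=> hn [hh hm] hg; split; first by case: (h) hn.
split; first by case: (h) hn hh.
move=> i; rewrite size_rcons ltnS => hi.
rewrite !nth_rcons; case: (ltnP i.+1 (size h)) => hi1.
  by rewrite (ltnW hi1); apply: hm.
have ei : i.+1 = size h by apply/eqP; rewrite eqn_leq hi hi1.
rewrite -ei ltnSn eqxx.
have -> : nth (init_pos q0) h i = last ip h by rewrite -nth_last -ei.
done.
Qed.

Lemma cp_rcons h a : h <> [::] -> cons_prop h -> (dup_owned (last ip h) -> a = f h) ->
  cons_prop (rcons h a).
Proof.
move=> hn hc ha i; rewrite size_rcons ltnS => hi.
rewrite !nth_rcons; case: (ltnP i.+1 (size h)) => hi1.
  rewrite (ltnW hi1) // => ho; rewrite hc //.
  by rewrite -cats1 takel_cat.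
have ei : i.+1 = size h by apply/eqP; rewrite eqn_leq hi hi1.
rewrite -ei ltnSn eqxx => ho.
rewrite ei -cats1 take_size_cat //; apply: ha.
by rewrite -nth_last -ei.
Qed.

Lemma kids_delta y : T y -> kids y \in delta (l y) (sigma (size y)).
Proof.
case: HT => _ _ _ Hs /Hs [c0 Hc0 Hch].
suff -> : kids y = c0 by [].
apply/setP => q; rewrite inE; apply/pbP/idP => [H|H]; first by apply/Hch.
by apply/Hch.
Qed.

Lemma step_facts h y q : play_prefix q0 delta sigma sigma' h -> cons_prop h -> T y ->
  last ip h = PosA (l y) q (size y) ->
  exists c', [/\ f (H1 h y) = PosC (l y) q (kids y) c' (size y),
    c' \in delta q (sigma' (size y)), play_prefix q0 delta sigma sigma' (H1 h y),
    cons_prop (H1 h y) &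
    forall q', q' \in c' ->
      [/\ play_prefix q0 delta sigma sigma' (rcons (H2 h y q') (f (H2 h y q'))),
          cons_prop (rcons (H2 h y q') (f (H2 h y q'))) &
          exists2 p', f (H2 h y q') = PosA p' q' (size y).+1 & p' \in kids y]].
Proof.
move=> hp hc hT hl.
have hn : h <> [::] by case: hp.
have pp1 : play_prefix q0 delta sigma sigma' (H1 h y).
  rewrite /H1 hl /=; apply: pp_rcons => //; rewrite hl /=; split => //.
  exact: kids_delta.
have cp1 : cons_prop (H1 h y).
  by rewrite /H1; apply: cp_rcons => //; rewrite hl.
have L1 : last ip (H1 h y) = PosB (l y) q (kids y) (size y) by rewrite /H1 last_rcons hl.
have := Hf _ pp1; rewrite L1 => /(_ isT).
case E: (f (H1 h y)) => [||p1 q1 c1 c' j1|] //= [e1 e2 e3 e4 Hc']; subst p1 q1 c1 j1.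
exists c'; split => // q' Hq'.
have hn1 : H1 h y <> [::] by rewrite /H1; case: (h).
have pp2 : play_prefix q0 delta sigma sigma' (rcons (H1 h y) (f (H1 h y))).
  by apply: pp_rcons => //; rewrite E /H1 last_rcons hl /=; split => //.
have cp2 : cons_prop (rcons (H1 h y) (f (H1 h y))).
  by apply: cp_rcons => //; rewrite /H1 last_rcons.
have hn2 : rcons (H1 h y) (f (H1 h y)) <> [::] by case: (H1 h y).
have pp3 : play_prefix q0 delta sigma sigma' (H2 h y q').
  by rewrite /H2 hl /=; apply: pp_rcons => //; rewrite last_rcons E.
have cp3 : cons_prop (H2 h y q').
  by rewrite /H2 hl /=; apply: cp_rcons => //; rewrite last_rcons E.
have L2 : last ip (H2 h y q') = PosD (l y) q (kids y) q' (size y) by rewrite /H2 last_rcons hl.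
have := Hf _ pp3; rewrite L2 => /(_ isT).
case E2: (f (H2 h y q')) => [p' q1 j1|||] //= [e1 e2 Hp']; subst q1 j1.
have hn3 : H2 h y q' <> [::].
  by move=> E3; have := congr1 size E3; rewrite /H2 size_rcons.
split.
- by apply: pp_rcons => //; rewrite L2.
- by apply: cp_rcons => //; rewrite E2.
- by exists p'.
Qed.


Definition Inv (s : st) : Prop :=
  [/\ play_prefix q0 delta sigma sigma' (sh s), cons_prop (sh s), T (sy s) &
      last ip (sh s) = PosA (l (sy s)) (dom_state (last ip (sh s))) (size (sy s))].

Lemma sok_rcons x n : sok (run (rcons x n)) -> sok (run x).
Proof. by rewrite run_rcons; case: (run x) => h y ok /= /and4P []. Qed.

Lemma run_inv x : sok (run x) -> Inv (run x).
Proof.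
case: HT => HT0 _ Hl0 _.
elim/last_ind: x => [|x n IH].
  move=> _; split => /=.
  - by split => //; split => // i; rewrite /= ltnS ltn0.
  - by move=> i; rewrite /= ltnS ltn0.
  - by [].
  - by rewrite Hl0.
rewrite run_rcons; case E: (run x) IH => [h y ok] IH /=.
case/and4P => hok hq hT' hl'.
case: (IH hok) => /= hp hc hTy hlast.
have [c' [E1 Hc' _ _ Hq]] := step_facts _ _ _ hp hc hTy hlast.
rewrite E1 /= in hq.
have [pp cp [p' E2 Hp']] := Hq _ hq.
split => //=; first exact/pbP.
by rewrite last_rcons E2 /= size_rcons; rewrite E2 /= in hl'; rewrite (eqP hl').
Qed.

Lemma sh_step h y ok n : sh (step (St h y ok) n) =
  h ++ [:: PosB (alt_state (last ip h)) (dom_state (last ip h)) (kids y) (size y);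
           f (H1 h y);
           PosD (alt_state (last ip h)) (dom_state (last ip h)) (kids y)
                (dq (dom_state (last ip h)) n) (size y);
           f (H2 h y (dq (dom_state (last ip h)) n))].
Proof. by rewrite /= /H2 /H1 -!cats1 -!catA. Qed.

Lemma alt_run x n r : sok (run (rcons x n)) -> r < 4 ->
  alt_state (nth ip (sh (run (rcons x n))) (4 * size x + r)) = l (sy (run x)).
Proof.
move=> ok hr; have := run_inv _ (sok_rcons _ _ ok).
have hs := size_run x.
move: ok; rewrite run_rcons; case E: (run x) hs => [h y ok] hs ok'.
have /= /and4P[hok hq _ _] := ok'.
case=> /= hp hc hTy hlast.
have [c' [E1 Hc' _ _ Hq]] := step_facts _ _ _ hp hc hTy hlast.
rewrite /H2 E1 /H1 -!cats1 -!catA nth_cat /= hs.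
case: r hr => [|r] hr.
  rewrite addn0 addn1 ltnSn.
  have -> : 4 * size x = (size h).-1 by rewrite hs addn1.
  by rewrite nth_last hlast.
have -> : (4 * size x + r.+1 < 4 * size x + 1) = false by apply/negbTE; lia.
have -> : 4 * size x + r.+1 - (4 * size x + 1) = r by lia.
case: r hr => [|[|[|r]]] //= _.
- by rewrite hlast.
- by rewrite hlast.
Qed.


Definition T' (x : seq nat) : Prop := sok (run x).
Definition l' (x : seq nat) : Q := dom_state (last ip (sh (run x))).

Lemma sim_tree : run_tree q0 delta sigma' T' l'.
Proof.
split => //.
- by move=> x n; apply: sok_rcons.
move=> x; rewrite /T' /l'.
have sy' := sy_run x; have hi := run_inv x.
case E: (run x) sy' hi => [h y ok] /= sy' hi hok.
have [/= hp hc hTy hlast] := hi hok.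
have sy2 : size y = size x by rewrite sy' size_map.
have [c' [E1 Hc' _ _ Hq]] := step_facts _ _ _ hp hc hTy hlast.
exists c'; first by rewrite -sy2.
move=> q'; split.
- move=> hq'; have [_ _ [p' E2 Hp']] := Hq _ hq'.
  move: Hp'; rewrite inE => /pbP [m [hm1 hm2]].
  exists (pickle (q', m)); rewrite /T' /l' run_rcons E /=.
  have dq1 : dq (dom_state (last ip h)) (pickle (q', m)) = q' by rewrite /dq pickleK.
  have dm1 : dm (pickle (q', m)) = m by rewrite /dm pickleK.
  rewrite dq1 dm1 hok E1 /= hq' E2 /= hm2 eqxx last_rcons; split => //.
  by rewrite andbT; apply/pbP.
- case=> n; rewrite /T' /l' run_rcons E /= => -[/and4P[_ hq _ _]]; rewrite E1 /= in hq.
  have [_ _ [p' E2 _]] := Hq _ hq.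
  by rewrite last_rcons E2 /= => <-.
Qed.

Lemma sh_ext x z : exists tl, sh (run (x ++ z)) = sh (run x) ++ tl.
Proof.
elim/last_ind: z => [|z n [tl IH]]; first by exists [::]; rewrite !cats0.
rewrite -rcons_cat run_rcons; case E: (run (x ++ z)) IH => [h y ok] IH.
by rewrite sh_step /= in IH *; rewrite IH -catA; eexists.
Qed.

Lemma mkseq_ext (b : nat -> nat) k K : k <= K -> exists z, mkseq b K = mkseq b k ++ z.
Proof.
move=> /subnKC <-; elim: (K - k) => [|d [z IH]]; first by exists [::]; rewrite addn0 cats0.
by rewrite addnS mkseqS IH rcons_cat; eexists.
Qed.

Lemma map_mkseq' (g : nat -> nat) (b : nat -> nat) k :
  map g (mkseq b k) = mkseq (fun i => g (b i)) k.
Proof. by elim: k => [//|k IH]; rewrite !mkseqS map_rcons IH. Qed.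

Lemma sim_acc : run_accepting F T' l'.
Proof.
move=> b hb.
pose H k := sh (run (mkseq b k)).
have sH k : size (H k) = 4 * k + 1 by rewrite /H size_run size_mkseq.
have Hext k K : k <= K -> exists tl, H K = H k ++ tl.
  by move=> /(mkseq_ext b) [z e]; rewrite /H e; apply: sh_ext.
pose rho i := nth ip (H i) i.
have rhoE i K : i < 4 * K + 1 -> rho i = nth ip (H K) i.
  move=> hi; rewrite /rho; case: (leqP i K) => hiK.
    have [tl ->] := Hext _ _ hiK; rewrite nth_cat sH.
    by have -> : i < 4 * i + 1 by lia.
  have [tl ->] := Hext _ _ (ltnW hiK); by rewrite nth_cat sH hi.
have inv K := run_inv _ (hb K).
have play : is_play q0 delta sigma sigma' rho.
  split; first by [].
  move=> k; rewrite (rhoE k k.+1) ?(rhoE k.+1 k.+1); try lia.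
  case: (inv k.+1) => [[_ [_ hm]] _ _ _]; apply: hm.
  by rewrite -/(H k.+1) sH; lia.
have cons : consistent f rho.
  move=> k ho; case: (inv k.+1) => _ hc _ _.
  have hk : k.+1 < size (H k.+1) by rewrite sH; lia.
  rewrite (rhoE k.+1 k.+1); last lia.
  rewrite hc //; last by rewrite -(rhoE k k.+1) //; lia.
  congr f; apply: (@eq_from_nth _ ip).
    by rewrite size_mkseq size_take hk.
  move=> i hi; have hi' : i < k.+1.
    by move: hi; rewrite size_takel //; exact: ltnW hk.
  rewrite nth_take // nth_mkseq // (rhoE i k.+1) //; lia.
have win := Hw _ play cons.
have hT k : T (mkseq (fun i => dm (b i)) k).
  by case: (inv k) => _ _; rewrite sy_run map_mkseq'.
have [N HN] := HA _ hT.
exists N => k hk; rewrite /l'; apply/negP => hF.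
have e4 : dom_state (rho (4 * k)) \in F.
  rewrite (rhoE (4 * k) k); last lia.
  have -> : 4 * k = (size (H k)).-1 by rewrite sH addn1.
  by rewrite nth_last.
have [k' hk' hF'] := win _ e4.
set K := k' %/ 4; set r := k' %% 4.
have ek : k' = 4 * K + r by rewrite /K /r {1}(divn_eq k' 4) mulnC.
have hr : r < 4 by rewrite ltn_mod.
have hKk : k <= K by rewrite /K leq_divRL //; lia.
move: hF'; rewrite (rhoE k' K.+1); last lia.
have -> : nth ip (H K.+1) k' = nth ip (H K.+1) (4 * size (mkseq b K) + r)
  by rewrite size_mkseq -ek.
rewrite /H mkseqS alt_run; [|by rewrite -mkseqS; exact: (hb K.+1)|by []].
rewrite sy_run map_mkseq'; apply/negP; apply: HN; lia.
Qed.

End Sim.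

Lemma simulation (AP Q : finType) (q0 : Q) (delta : Q -> {set AP} -> {set {set Q}})
  (F : {set Q}) (sigma sigma' : word AP) :
  aca_accepts q0 delta F sigma -> dup_wins_game q0 delta F sigma sigma' ->
  aca_accepts q0 delta F sigma'.
Proof.
move=> [T [l [HT HA]]] [f [Hf Hw]].
exists (T' Q q0 T l f), (l' Q q0 T l f); split.
- by eapply sim_tree; eassumption.
- by eapply sim_acc; eassumption.
Qed.

Theorem lemma6 (I O : finType) (phi : ltl ((I + O)%type))
  (Q : finType) (q0 : Q) (delta : Q -> {set (I + O)%type} -> {set {set Q}}) (F : {set Q}) :
  aca_wf delta ->
  (forall sigma : word ((I + O)%type), aca_accepts q0 delta F sigma <-> ltl_sat sigma phi) ->
  (exists s : seq {set I} -> {set O}, finite_state s /\ winning phi s) ->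
  forall s : seq {set I} -> {set O},
    finite_state s -> delay_dominant q0 delta F s -> winning phi s.
Proof.
move=> _ Hlang [t [ft wt]] s _ Hdom gamma.
apply/Hlang; apply: (@simulation _ _ _ _ _ (Defs.comp t gamma)).
- by apply/Hlang; apply: wt.
- exact: Hdom.
Qed.
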